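(* Let $N_1=(S_1,T_1,F_1,M_{0,1},\ell)$ and $N_2=(S_2,T_2,F_2,M_{0,2},\ell_2)$ be two Petri nets, $N_2$ being plain. Then $N_1$ and $N_2$ are branching ST-bisimilar (with explicit divergence) iff they are branching split bisimilar (with explicit divergence).
   Context: Fix visible actions $\mathrm{Act}$ and $\tau\notin\mathrm{Act}$. A Petri net $(S,T,F,M_0,\ell)$ has disjoint $S,T$, $F:(S\times T)\cup(T\times S)\to\mathbb N$, $M_0\in\mathbb N^S$, $\ell:T\to\mathrm{Act}\cup\{\tau\}$; ${}^\bullet t(s)=F(s,t)$, $t^\bullet(s)=F(t,s)$; $M[t\rangle M'$ iff ${}^\bullet t\le M$ and $M'=M-{}^\bullet t+t^\bullet$. Plain: $\ell$ injective and never $\tau$. ST-LTS: states $(M,U)\in\mathbb N^S\times T^*$, initial $(M_0,\varepsilon)$; $(M,U)\xrightarrow{a^+}(M-{}^\bullet t,Ut)$ iff $\ell(t)=a\in\mathrm{Act}$ and $M[t\rangle$; $(M,U)\xrightarrow{a^{-n}}(M+t^\bullet,U^{-n})$ ($n>0$) iff the $n$-th element $t$ of $U$ has label $a$, $U^{-n}$ being $U$ with it removed; $(M,U)\xrightarrow{\tau}(M',U)$ iff $M[t\rangle M'$ with $\ell(t)=\tau$. Split LTS: states $(M,U)\in\mathbb N^S\times\mathbb N^T$, initial $(M_0,\emptyset)$; $(M,U)\xrightarrow{a^+}(M-{}^\bullet t,U+\{t\})$ iff $\ell(t)=a\in\mathrm{Act}$ and $M[t\rangle$; $(M,U)\xrightarrow{a^-}(M+t^\bullet,U-\{t\})$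 iff $t\in U$ and $\ell(t)=a$; $(M,U)\xrightarrow{\tau}(M',U)$ iff $M[t\rangle M'$ with $\ell(t)=\tau$. For LTSs: $\Rightarrow$ is the reflexive transitive closure of $\xrightarrow{\tau}$; $\xrightarrow{(\alpha)}$ means $\xrightarrow{\alpha}$ or (if $\alpha=\tau$) equality. A branching bisimulation is a relation $\mathcal B$ relating initial states such that if $\mathfrak M_1\mathcal B\mathfrak M_2$ and $\mathfrak M_1\xrightarrow{\alpha}\mathfrak M_1'$ then $\mathfrak M_2\Rightarrow\mathfrak M_2^\dagger\xrightarrow{(\alpha)}\mathfrak M_2'$ with $\mathfrak M_1\mathcal B\mathfrak M_2^\dagger$, $\mathfrak M_1'\mathcal B\mathfrak M_2'$, and symmetrically. It is with explicit divergence if moreover: if $\mathfrak M_1\mathcal B\mathfrak M_2$ and there is an infinite $\tau$-sequence from $\mathfrak M_1$ all of whose states are related to $\mathfrak M_2$, then there is an infinite $\tau$-sequence from $\mathfrak M_2$ with every state of the first related to every state of the second, and symmetrically. Two nets are branching ST-bisimilar (resp. branching split bisimilar), possibly with explicit divergence, iff such a relation exists between their ST-LTSs (resp. split LTSs). *)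

(* Defs.v *)
From Stdlib Require Import List Arith.
Import ListNotations.
Set Implicit Arguments.

(* A labelled Petri net over the visible actions Act; the label None is tau.
   pre s t = F(s,t) (= •t(s)), post t s = F(t,s) (= t•(s)). *)
Record petri_net (Act : Type) := PetriNet {
  place : Type;
  transition : Type;
  pre : place -> transition -> nat;
  post : transition -> place -> nat;
  m0 : place -> nat;
  lab : transition -> option Act
}.

Definition plain {Act} (N : petri_net Act) : Prop :=
  (forall t t' : transition N, lab N t = lab N t' -> t = t') /\
  (forall t : transition N, lab N t <> None).

Definition marking {Act} (N : petri_net Act) := place N -> nat.

Definition enabled {Act} (N : petri_net Act) (M : marking N) (t : transition N) :=
  forall s, pre N s t <= M s.

Definition fires {Act} (N : petri_net Act) (M : marking N) (t : transition N)
  (M' : marking N) :=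
  enabled M t /\ forall s, M' s = M s - pre N s t + post N t s.

(* Labelled transition systems; the action None is tau. *)
Record lts (L : Type) := LTS {
  lstate : Type;
  linit : lstate;
  lstep : lstate -> option L -> lstate -> Prop
}.

Inductive st_label (Act : Type) :=
| STplus : Act -> st_label Act
| STminus : Act -> nat -> st_label Act.

Definition st_state {Act} (N : petri_net Act) : Type :=
  (marking N * list (transition N))%type.

Inductive st_step {Act} (N : petri_net Act) :
  st_state N -> option (st_label Act) -> st_state N -> Prop :=
| st_plus : forall (M M' : marking N) U t a,
    lab N t = Some a -> enabled M t ->
    (forall s, M' s = M s - pre N s t) ->
    st_step (M, U) (Some (STplus a)) (M', U ++ [t])
| st_minus : forall (M M' : marking N) U1 t U2 a n,
    0 < n -> length U1 = n - 1 -> lab N t = Some a ->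
    (forall s, M' s = M s + post N t s) ->
    st_step (M, U1 ++ t :: U2) (Some (STminus a n)) (M', U1 ++ U2)
| st_tau : forall (M M' : marking N) U t,
    lab N t = None -> fires M t M' ->
    st_step (M, U) None (M', U).

Definition st_lts {Act} (N : petri_net Act) : lts (st_label Act) :=
  @LTS _ (st_state N) (m0 N, []) (@st_step Act N).

Inductive split_label (Act : Type) :=
| SPplus : Act -> split_label Act
| SPminus : Act -> split_label Act.

Definition split_state {Act} (N : petri_net Act) : Type :=
  (marking N * (transition N -> nat))%type.

Inductive split_step {Act} (N : petri_net Act) :
  split_state N -> option (split_label Act) -> split_state N -> Prop :=
| sp_plus : forall (M M' : marking N) (U U' : transition N -> nat) t a,
    lab N t = Some a -> enabled M t ->
    (forall s, M' s = M s - pre N s t) ->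
    U' t = S (U t) -> (forall t', t' <> t -> U' t' = U t') ->
    split_step (M, U) (Some (SPplus a)) (M', U')
| sp_minus : forall (M M' : marking N) (U U' : transition N -> nat) t a,
    lab N t = Some a -> 0 < U t ->
    (forall s, M' s = M s + post N t s) ->
    U' t = U t - 1 -> (forall t', t' <> t -> U' t' = U t') ->
    split_step (M, U) (Some (SPminus a)) (M', U')
| sp_tau : forall (M M' : marking N) (U : transition N -> nat) t,
    lab N t = None -> fires M t M' ->
    split_step (M, U) None (M', U).

Definition split_lts {Act} (N : petri_net Act) : lts (split_label Act) :=
  @LTS _ (split_state N) (m0 N, fun _ => 0) (@split_step Act N).

Inductive tau_star {L} (X : lts L) : lstate X -> lstate X -> Prop :=
| tau_refl : forall p, tau_star X p p
| tau_cons : forall p p' p'', lstep X p None p' -> tau_star X p' p'' ->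
    tau_star X p p''.

Definition branching_transfer {L} (X Y : lts L)
  (B : lstate X -> lstate Y -> Prop) : Prop :=
  forall p q, B p q -> forall alpha p', lstep X p alpha p' ->
    exists q_dag q', tau_star Y q q_dag /\
      (lstep Y q_dag alpha q' \/ (alpha = None /\ q' = q_dag)) /\
      B p q_dag /\ B p' q'.

Definition converse {A B : Type} (R : A -> B -> Prop) : B -> A -> Prop :=
  fun b a => R a b.

Definition branching_bisimulation {L} (X Y : lts L)
  (B : lstate X -> lstate Y -> Prop) : Prop :=
  B (linit X) (linit Y) /\ @branching_transfer L X Y B /\
  @branching_transfer L Y X (converse B).

Definition divergence_transfer {L} (X Y : lts L)
  (B : lstate X -> lstate Y -> Prop) : Prop :=
  forall p q, B p q ->
    forall f : nat -> lstate X,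
      f 0 = p -> (forall n, lstep X (f n) None (f (S n))) ->
      (forall n, B (f n) q) ->
    exists g : nat -> lstate Y,
      g 0 = q /\ (forall n, lstep Y (g n) None (g (S n))) /\
      (forall n m, B (f n) (g m)).

Definition branching_bisimulation_div {L} (X Y : lts L)
  (B : lstate X -> lstate Y -> Prop) : Prop :=
  @branching_bisimulation L X Y B /\ @divergence_transfer L X Y B /\
  @divergence_transfer L Y X (converse B).

Definition branching_ST_bisimilar {Act} (N1 N2 : petri_net Act) : Prop :=
  exists B, @branching_bisimulation _ (st_lts N1) (st_lts N2) B.
Definition branching_ST_bisimilar_div {Act} (N1 N2 : petri_net Act) : Prop :=
  exists B, @branching_bisimulation_div _ (st_lts N1) (st_lts N2) B.
Definition branching_split_bisimilar {Act} (N1 N2 : petri_net Act) : Prop :=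
  exists B, @branching_bisimulation _ (split_lts N1) (split_lts N2) B.
Definition branching_split_bisimilar_div {Act} (N1 N2 : petri_net Act) : Prop :=
  exists B, @branching_bisimulation_div _ (split_lts N1) (split_lts N2) B.

(* Main.v *)
Require Import Defs.
From Stdlib Require Import List Arith Lia ClassicalEpsilon FunctionalExtensionality.
Import ListNotations.

Fixpoint ms {T : Type} (l : list T) (t : T) : nat :=
  match l with
  | [] => 0
  | x :: l' => (if excluded_middle_informative (x = t) then 1 else 0) + ms l' t
  end.

Lemma ms_app {T} (A C : list T) t : ms (A ++ C) t = ms A t + ms C t.
Proof. induction A; simpl; [reflexivity| rewrite IHA; lia]. Qed.

Lemma ms_in {T} (l : list T) t : 0 < ms l t -> In t l.
Proof.
  induction l; simpl; [lia|].
  destruct (excluded_middle_informative (a = t)); [left; auto| intro; right; auto].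
Qed.

Lemma ms_snoc_eq {T} (U : list T) t : ms (U ++ [t]) t = S (ms U t).
Proof.
  rewrite ms_app; simpl. destruct (excluded_middle_informative (t = t)); [lia|congruence].
Qed.
Lemma ms_snoc_neq {T} (U : list T) t t' : t' <> t -> ms (U ++ [t]) t' = ms U t'.
Proof.
  intro H; rewrite ms_app; simpl. destruct (excluded_middle_informative (t = t')); [congruence|lia].
Qed.
Lemma ms_mid_eq {T} (A C : list T) t : ms (A ++ C) t = ms (A ++ t :: C) t - 1.
Proof.
  rewrite !ms_app; simpl. destruct (excluded_middle_informative (t = t)); [lia|congruence].
Qed.
Lemma ms_mid_neq {T} (A C : list T) t t' : t' <> t -> ms (A ++ C) t' = ms (A ++ t :: C) t'.
Proof.
  intro H; rewrite !ms_app; simpl. destruct (excluded_middle_informative (t = t')); [congruence|lia].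
Qed.
Lemma ms_mid_pos {T} (A C : list T) t : 0 < ms (A ++ t :: C) t.
Proof.
  rewrite !ms_app; simpl. destruct (excluded_middle_informative (t = t)); [lia|congruence].
Qed.

Lemma ms_plus_eq {T} (U' : T -> nat) L t :
  U' t = S (ms L t) -> (forall t', t' <> t -> U' t' = ms L t') -> U' = ms (L ++ [t]).
Proof.
  intros H1 H2; apply functional_extensionality; intro x.
  destruct (excluded_middle_informative (x = t)) as [->|n].
  - rewrite ms_snoc_eq; auto.
  - rewrite ms_snoc_neq; auto.
Qed.

Lemma ms_minus_eq {T} (U' : T -> nat) A C t :
  U' t = ms (A ++ t :: C) t - 1 -> (forall t', t' <> t -> U' t' = ms (A ++ t :: C) t') ->
  U' = ms (A ++ C).
Proof.
  intros H1 H2; apply functional_extensionality; intro x.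
  destruct (excluded_middle_informative (x = t)) as [->|n].
  - rewrite ms_mid_eq; auto.
  - rewrite (ms_mid_neq A C t x); auto.
Qed.

Lemma st_plus_inv {Act} {N : petri_net Act} {x a y} :
  st_step x (Some (STplus a)) y -> exists t, lab N t = Some a /\ enabled (fst x) t /\
   (forall s, fst y s = fst x s - pre N s t) /\ snd y = snd x ++ [t].
Proof. intros H; inversion H; subst; simpl; eexists; repeat split; eauto. Qed.

Lemma st_minus_inv {Act} {N : petri_net Act} {x a n y} :
  st_step x (Some (STminus a n)) y -> exists A t C, snd x = A ++ t :: C /\ snd y = A ++ C /\
   0 < n /\ length A = n - 1 /\ lab N t = Some a /\ (forall s, fst y s = fst x s + post N t s).
Proof. intros H; inversion H; subst; simpl; do 3 eexists; repeat split; eauto. Qed.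

Lemma st_tau_inv {Act} {N : petri_net Act} {x y} :
  st_step x None y -> exists t, lab N t = None /\ fires (fst x) t (fst y) /\ snd y = snd x.
Proof. intros H; inversion H; subst; simpl; eexists; split; [eassumption|split; [eassumption|reflexivity]]. Qed.

Lemma sp_plus_inv {Act} {N : petri_net Act} {x a y} :
  split_step x (Some (SPplus a)) y -> exists t, lab N t = Some a /\ enabled (fst x) t /\
   (forall s, fst y s = fst x s - pre N s t) /\ snd y t = S (snd x t) /\
   (forall t', t' <> t -> snd y t' = snd x t').
Proof. intros H; inversion H; subst; simpl; eexists; repeat split; eauto. Qed.

Lemma sp_minus_inv {Act} {N : petri_net Act} {x a y} :
  split_step x (Some (SPminus a)) y -> exists t, lab N t = Some a /\ 0 < snd x t /\
   (forall s, fst y s = fst x s + post N t s) /\ snd y t = snd x t - 1 /\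
   (forall t', t' <> t -> snd y t' = snd x t').
Proof. intros H; inversion H; subst; simpl; eexists; repeat split; eauto. Qed.

Lemma sp_tau_inv {Act} {N : petri_net Act} {x y} :
  split_step x None y -> exists t, lab N t = None /\ fires (fst x) t (fst y) /\ snd y = snd x.
Proof. intros H; inversion H; subst; simpl; eexists; split; [eassumption|split; [eassumption|reflexivity]]. Qed.

Lemma plain_no_st_tau {Act} {N : petri_net Act} : plain N -> forall x y, ~ @st_step Act N x None y.
Proof. intros [_ Hp] x y H. destruct (st_tau_inv H) as (t & Ht & _). apply (Hp t Ht). Qed.

Lemma plain_no_sp_tau {Act} {N : petri_net Act} : plain N -> forall x y, ~ @split_step Act N x None y.
Proof. intros [_ Hp] x y H. destruct (sp_tau_inv H) as (t & Ht & _). apply (Hp t Ht). Qed.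

Lemma st_tau_star_split {Act} {N : petri_net Act} {x y} :
  tau_star (st_lts N) x y -> snd y = snd x /\
  tau_star (split_lts N) (fst x, ms (snd x)) (fst y, ms (snd y)).
Proof.
  induction 1 as [p|p p' p'' H Ht IH].
  - split; [reflexivity| constructor].
  - destruct IH as [E T]. destruct (st_tau_inv H) as (t & Hl & Hf & E').
    split; [congruence|].
    eapply tau_cons; [|exact T]. simpl. rewrite E'. eapply sp_tau; eauto.
Qed.

Lemma sp_tau_star_st {Act} {N : petri_net Act} {x y} :
  tau_star (split_lts N) x y -> snd y = snd x /\
  forall U, tau_star (st_lts N) (fst x, U) (fst y, U).
Proof.
  induction 1 as [p|p p' p'' H Ht IH].
  - split; [reflexivity| constructor].
  - destruct IH as [E T]. destruct (sp_tau_inv H) as (t & Hl & Hf & E').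
    split; [congruence|]. intro U.
    eapply tau_cons; [|exact (T U)]. simpl. eapply st_tau; eauto.
Qed.

Lemma tau_star_none {L} (X : lts L) x y :
  (forall a b, ~ lstep X a None b) -> tau_star X x y -> y = x.
Proof. intros Hn H; destruct H; [reflexivity| exfalso; eapply Hn; eauto]. Qed.

Lemma transfer_iff {L} (X Y : lts L) (R R' : lstate X -> lstate Y -> Prop) :
  (forall p q, R p q <-> R' p q) -> branching_transfer X Y R -> branching_transfer X Y R'.
Proof.
  intros E HT p q H a p' Hs. apply E in H.
  destruct (HT p q H a p' Hs) as (qd & q' & T & O & H1 & H2).
  exists qd, q'; repeat split; auto; apply E; auto.
Qed.

Definition Bs {Act} {N N' : petri_net Act} (B : st_state N -> st_state N' -> Prop)
  (p : split_state N) (q : split_state N') : Prop :=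
  exists U1 U2, B (fst p, U1) (fst q, U2) /\ snd p = ms U1 /\ snd q = ms U2.

Lemma st2split_transfer {Act} (N N' : petri_net Act) B :
  branching_transfer (st_lts N) (st_lts N') B ->
  branching_transfer (split_lts N) (split_lts N') (Bs B).
Proof.
  intros HT [M1 u1] [M2 u2] [U1 [U2 [HB [E1 E2]]]] alpha [M1' u1'] Hstep.
  simpl in *. subst u1 u2.
  destruct alpha as [[a|a]|].
  - destruct (sp_plus_inv Hstep) as (t & Hl & Hen & Hm & Hu1 & Hu2). simpl in *.
    assert (Hst : st_step (M1,U1) (Some (STplus a)) (M1', U1 ++ [t])) by (constructor; auto).
    destruct (HT _ _ HB _ _ Hst) as ([M2d U2d] & [M2' U2'] & Htau & Hor & HBd & HB').
    destruct Hor as [Hs | [Hc _]]; [|discriminate].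
    destruct (st_tau_star_split Htau) as [EU Htau']. simpl in EU, Htau'. subst U2d.
    destruct (st_plus_inv Hs) as (t2 & Hl2 & Hen2 & Hm2 & EU2). simpl in *. subst U2'.
    exists (M2d, ms U2), (M2', ms (U2 ++ [t2])). split; [exact Htau'|]. split.
    + left. simpl. eapply sp_plus; eauto.
      * apply ms_snoc_eq.
      * intros; apply ms_snoc_neq; auto.
    + split.
      * exists U1, U2; auto.
      * exists (U1++[t]), (U2++[t2]); simpl; split; auto. split; auto.
        apply ms_plus_eq; auto.
  - destruct (sp_minus_inv Hstep) as (t & Hl & Hpos & Hm & Hu1 & Hu2). simpl in *.
    destruct (in_split _ _ (ms_in _ _ Hpos)) as (A & C & ->).
    assert (Hst : st_step (M1, A ++ t :: C) (Some (STminus a (S (length A)))) (M1', A ++ C))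
      by (apply st_minus; auto; lia).
    destruct (HT _ _ HB _ _ Hst) as ([M2d U2d] & [M2' U2'] & Htau & Hor & HBd & HB').
    destruct Hor as [Hs | [Hc _]]; [|discriminate].
    destruct (st_tau_star_split Htau) as [EU Htau']. simpl in EU, Htau'. subst U2d.
    destruct (st_minus_inv Hs) as (A2 & t2 & C2 & EA & EB & _ & _ & Hl2 & Hm2). simpl in *.
    subst U2 U2'.
    exists (M2d, ms (A2 ++ t2 :: C2)), (M2', ms (A2 ++ C2)). split; [exact Htau'|]. split.
    + left. simpl. eapply sp_minus; eauto.
      * apply ms_mid_pos.
      * apply ms_mid_eq.
      * intros; apply ms_mid_neq; auto.
    + split.
      * exists (A ++ t :: C), (A2 ++ t2 :: C2); auto.
      * exists (A ++ C), (A2 ++ C2); simpl; split; auto. split; auto.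
        apply ms_minus_eq with (t := t); auto.
  - destruct (sp_tau_inv Hstep) as (t & Hl & Hf & Eu). simpl in *. subst u1'.
    assert (Hst : st_step (M1,U1) None (M1', U1)) by (eapply st_tau; eauto).
    destruct (HT _ _ HB _ _ Hst) as ([M2d U2d] & [M2' U2'] & Htau & Hor & HBd & HB').
    destruct (st_tau_star_split Htau) as [EU Htau']. simpl in EU, Htau'. subst U2d.
    destruct Hor as [Hs | [_ Hc]].
    + destruct (st_tau_inv Hs) as (t2 & Hl2 & Hf2 & EU2). simpl in *. subst U2'.
      exists (M2d, ms U2), (M2', ms U2). split; [exact Htau'|]. split.
      * left. simpl. eapply sp_tau; eauto.
      * split; [exists U1, U2; auto| exists U1, U2; auto].
    + injection Hc as -> ->.
      exists (M2d, ms U2), (M2d, ms U2). split; [exact Htau'|]. split.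
      * right; auto.
      * split; [exists U1, U2; auto| exists U1, U2; auto].
Qed.

Lemma Bs_converse {Act} (N N' : petri_net Act) (B : st_state N -> st_state N' -> Prop) p q :
  converse (Bs B) p q <-> Bs (converse B) p q.
Proof.
  unfold converse, Bs; split; intros (U1 & U2 & H & E1 & E2); exists U2, U1; auto.
Qed.

Lemma st2split_div {Act} (N N' : petri_net Act) B :
  (forall x y, ~ @st_step Act N' x None y) ->
  branching_transfer (st_lts N) (st_lts N') B ->
  divergence_transfer (st_lts N) (st_lts N') B ->
  divergence_transfer (split_lts N) (split_lts N') (Bs B).
Proof.
  intros Hnt HT HD [M1 u1] [M2 u2] [U1 [U2 [HB [E1 E2]]]] f Hf0 Hstep Hrel.
  simpl in *.
  set (f' := fun n => (fst (f n), U1) : st_state N).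
  assert (Hs' : forall n, st_step (f' n) None (f' (S n))).
  { intro n. destruct (sp_tau_inv (Hstep n)) as (t & Hl & Hf & _).
    unfold f'. eapply st_tau; eauto. }
  assert (Hr : forall n, B (f' n) (M2,U2)).
  { induction n.
    - unfold f'. rewrite Hf0. exact HB.
    - destruct (HT _ _ IHn None _ (Hs' n)) as (qd & q' & Htau & Hor & _ & H2).
      apply tau_star_none in Htau; [|exact Hnt]. subst qd.
      destruct Hor as [Hs | [_ ->]]; [exfalso; eapply Hnt; exact Hs| exact H2]. }
  destruct (HD (f' 0) (M2,U2) (Hr 0) f' eq_refl Hs' Hr) as (g & _ & Hg & _).
  exfalso; eapply Hnt; exact (Hg 0).
Qed.

Definition Bst {Act} {N N' : petri_net Act} (B : split_state N -> split_state N' -> Prop)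
  (p : st_state N) (q : st_state N') : Prop :=
  map (lab N) (snd p) = map (lab N') (snd q) /\ B (fst p, ms (snd p)) (fst q, ms (snd q)).

Lemma map_eq_mid {A B} (f : A -> B) (l : list A) L1 y L2 :
  map f l = L1 ++ y :: L2 -> exists A2 x C2, l = A2 ++ x :: C2 /\ map f A2 = L1 /\
    f x = y /\ map f C2 = L2.
Proof.
  revert l; induction L1 as [|z L1 IH]; intros l H; destruct l as [|w l]; simpl in *; try discriminate.
  - injection H as H1 H2. exists [], w, l; auto.
  - injection H as H1 H2. destruct (IH _ H2) as (A2 & x & C2 & E & E1 & E2 & E3).
    exists (w :: A2), x, C2; subst; simpl; auto.
Qed.

Lemma split2st_transfer {Act} (N N' : petri_net Act) B :
  plain N' ->
  branching_transfer (split_lts N) (split_lts N') B ->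
  branching_transfer (st_lts N) (st_lts N') (Bst B).
Proof.
  intros Hpl HT [M1 U1] [M2 U2] [HL HB] alpha [M1' U1'] Hstep. simpl in *.
  assert (Hnt : forall a b, ~ lstep (split_lts N') a None b) by apply (plain_no_sp_tau Hpl).
  destruct alpha as [[a|a n]|].
  - destruct (st_plus_inv Hstep) as (t & Hl & Hen & Hm & EU). simpl in *. subst U1'.
    assert (Hs : split_step (M1, ms U1) (Some (SPplus a)) (M1', ms (U1 ++ [t]))).
    { eapply sp_plus; eauto. apply ms_snoc_eq. intros; apply ms_snoc_neq; auto. }
    destruct (HT _ _ HB _ _ Hs) as (qd & q' & Htau & Hor & HBd & HB').
    apply tau_star_none in Htau; [|exact Hnt]. subst qd.
    destruct Hor as [Hs2 | [Hc _]]; [|discriminate].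
    destruct (sp_plus_inv Hs2) as (t2 & Hl2 & Hen2 & Hm2 & Hu1 & Hu2). simpl in *.
    destruct q' as [M2' u2']. simpl in *.
    exists (M2, U2), (M2', U2 ++ [t2]). split; [constructor|]. split.
    + left. simpl. constructor; auto.
    + split; [split; auto|]. split.
      * simpl. rewrite !map_app, HL. simpl. rewrite Hl, Hl2. reflexivity.
      * simpl. replace (ms (U2 ++ [t2])) with u2'; auto. apply ms_plus_eq; auto.
  - destruct (st_minus_inv Hstep) as (A & t & C & EA & EB & Hn & HlA & Hl & Hm). simpl in *.
    subst U1 U1'.
    assert (Hs : split_step (M1, ms (A ++ t :: C)) (Some (SPminus a)) (M1', ms (A ++ C))).
    { eapply sp_minus; eauto. apply ms_mid_pos. apply ms_mid_eq. intros; apply ms_mid_neq; auto. }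
    destruct (HT _ _ HB _ _ Hs) as (qd & q' & Htau & Hor & HBd & HB').
    apply tau_star_none in Htau; [|exact Hnt]. subst qd.
    destruct Hor as [Hs2 | [Hc _]]; [|discriminate].
    destruct (sp_minus_inv Hs2) as (t2 & Hl2 & Hpos2 & Hm2 & Hu1 & Hu2). simpl in *.
    destruct q' as [M2' u2']. simpl in *.
    rewrite map_app in HL. simpl in HL. symmetry in HL.
    destruct (map_eq_mid _ _ _ _ _ HL) as (A2 & x & C2 & EU2 & EA2 & Ex & EC2). subst U2.
    assert (x = t2) by (apply (proj1 Hpl); congruence). subst x.
    exists (M2, A2 ++ t2 :: C2), (M2', A2 ++ C2). split; [constructor|]. split.
    + left. simpl. apply st_minus; auto.
      rewrite <- HlA, <- (length_map (lab N) A), <- EA2, length_map. reflexivity.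
    + split; [split; [simpl; rewrite !map_app; simpl; rewrite EA2, EC2, Ex; reflexivity| exact HB]|]. split.
      * simpl. rewrite !map_app, EA2, EC2. reflexivity.
      * simpl. replace (ms (A2 ++ C2)) with u2'; auto. apply ms_minus_eq with (t := t2); auto.
  - destruct (st_tau_inv Hstep) as (t & Hl & Hf & EU). simpl in *. subst U1'.
    assert (Hs : split_step (M1, ms U1) None (M1', ms U1)) by (eapply sp_tau; eauto).
    destruct (HT _ _ HB _ _ Hs) as (qd & q' & Htau & Hor & HBd & HB').
    apply tau_star_none in Htau; [|exact Hnt]. subst qd.
    destruct Hor as [Hs2 | [_ ->]]; [exfalso; eapply Hnt; exact Hs2|].
    exists (M2, U2), (M2, U2). split; [constructor|]. split; [right; auto|].
    split; split; auto.
Qed.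

Lemma split2st_converse {Act} (N N' : petri_net Act) B :
  plain N' ->
  branching_transfer (split_lts N) (split_lts N') B ->
  branching_transfer (split_lts N') (split_lts N) (converse B) ->
  branching_transfer (st_lts N') (st_lts N) (converse (Bst B)).
Proof.
  intros Hpl HT HC [M2 U2] [M1 U1] [HL HB] alpha [M2' U2'] Hstep. simpl in *.
  assert (Hnt : forall a b, ~ lstep (split_lts N') a None b) by apply (plain_no_sp_tau Hpl).
  destruct alpha as [[a|a n]|].
  - destruct (st_plus_inv Hstep) as (t2 & Hl2 & Hen & Hm & EU). simpl in *. subst U2'.
    assert (Hs : split_step (M2, ms U2) (Some (SPplus a)) (M2', ms (U2 ++ [t2]))).
    { eapply sp_plus; eauto. apply ms_snoc_eq. intros; apply ms_snoc_neq; auto. }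
    destruct (HC (M2, ms U2) (M1, ms U1) HB _ _ Hs) as ([M1d u1d] & [M1'' u1''] & Htau & Hor & HBd & HB').
    destruct Hor as [Hs1 | [Hc _]]; [|discriminate].
    destruct (sp_tau_star_st Htau) as [Eu Htau']. simpl in Eu, Htau'. subst u1d.
    destruct (sp_plus_inv Hs1) as (t & Hl & Hen1 & Hm1 & Hu1 & Hu2). simpl in *.
    exists (M1d, U1), (M1'', U1 ++ [t]). split; [apply Htau'|]. split.
    + left. simpl. constructor; auto.
    + split; [split; auto|]. split.
      * simpl. rewrite !map_app, HL. simpl. rewrite Hl, Hl2. reflexivity.
      * simpl. replace (ms (U1 ++ [t])) with u1''; auto. apply ms_plus_eq; auto.
  - destruct (st_minus_inv Hstep) as (A2 & t2 & C2 & EA & EB & Hn & HlA & Hl2 & Hm). simpl in *.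
    subst U2 U2'.
    rewrite map_app in HL. simpl in HL.
    destruct (map_eq_mid _ _ _ _ _ HL) as (A & t & C & EU1 & EA1 & Et & EC1). subst U1.
    set (M1' := fun s => M1 s + post N t s).
    assert (Hs : split_step (M1, ms (A ++ t :: C)) (Some (SPminus a)) (M1', ms (A ++ C))).
    { eapply sp_minus with (t := t).
      - rewrite Et; exact Hl2.
      - apply ms_mid_pos.
      - intro; reflexivity.
      - apply ms_mid_eq.
      - intros; apply ms_mid_neq; auto. }
    destruct (HT _ _ HB _ _ Hs) as (qd & q' & Htau & Hor & HBd & HB').
    apply tau_star_none in Htau; [|exact Hnt]. subst qd.
    destruct Hor as [Hs2 | [Hc _]]; [|discriminate].
    destruct (sp_minus_inv Hs2) as (t2' & Hl2' & Hpos2 & Hm2 & Hu1 & Hu2). simpl in *.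
    assert (t2' = t2) by (apply (proj1 Hpl); congruence). subst t2'.
    destruct q' as [M2'' u2'']. simpl in *.
    exists (M1, A ++ t :: C), (M1', A ++ C). split; [constructor|]. split.
    + left. simpl. apply st_minus; auto.
      * rewrite <- HlA, <- (length_map (lab N) A), EA1, length_map. reflexivity.
      * rewrite Et; exact Hl2.
    + split; [split; [simpl; rewrite !map_app; simpl; rewrite EA1, EC1, Et; reflexivity| exact HB]|]. split.
      * simpl. rewrite !map_app, EA1, EC1. reflexivity.
      * simpl.
        replace (ms (A2 ++ C2)) with u2'' by (apply ms_minus_eq with (t := t2); auto).
        replace M2' with M2''; auto.
        apply functional_extensionality; intro s; rewrite Hm, Hm2; reflexivity.
  - exfalso. eapply (plain_no_st_tau Hpl); exact Hstep.
Qed.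

Lemma split2st_div {Act} (N N' : petri_net Act) B :
  plain N' ->
  divergence_transfer (split_lts N) (split_lts N') B ->
  divergence_transfer (st_lts N) (st_lts N') (Bst B).
Proof.
  intros Hpl HD [M1 U1] [M2 U2] [HL HB] f Hf0 Hstep Hrel. simpl in *.
  set (fs := fun n => (fst (f n), ms (snd (f n))) : split_state N).
  assert (Hs : forall n, split_step (fs n) None (fs (S n))).
  { intro n. destruct (st_tau_inv (Hstep n)) as (t & Hl & Hf & E).
    unfold fs. rewrite E. eapply sp_tau; eauto. }
  assert (Hr : forall n, B (fs n) (M2, ms U2)).
  { intro n. destruct (Hrel n) as [_ H]. exact H. }
  assert (E0 : fs 0 = (M1, ms U1)) by (unfold fs; rewrite Hf0; reflexivity).
  destruct (HD (fs 0) (M2, ms U2) (Hr 0) fs eq_refl Hs Hr) as (g & _ & Hg & _).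
  exfalso; eapply (plain_no_sp_tau Hpl); exact (Hg 0).
Qed.

Lemma div_none_st {Act} (N N' : petri_net Act) R :
  plain N -> divergence_transfer (st_lts N) (st_lts N') R.
Proof. intros Hpl p q _ f _ Hs _. exfalso; eapply (plain_no_st_tau Hpl); exact (Hs 0). Qed.

Lemma div_none_sp {Act} (N N' : petri_net Act) R :
  plain N -> divergence_transfer (split_lts N) (split_lts N') R.
Proof. intros Hpl p q _ f _ Hs _. exfalso; eapply (plain_no_sp_tau Hpl); exact (Hs 0). Qed.

Theorem proposition3p15 (Act : Type) (N1 N2 : petri_net Act) :
  plain N2 ->
  (branching_ST_bisimilar N1 N2 <-> branching_split_bisimilar N1 N2) /\
  (branching_ST_bisimilar_div N1 N2 <-> branching_split_bisimilar_div N1 N2).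
Proof.
  intros Hpl.
  assert (A1 : forall B, branching_bisimulation (st_lts N1) (st_lts N2) B ->
                branching_bisimulation (split_lts N1) (split_lts N2) (Bs B)).
  { intros B [Hi [HT HC]]. split; [|split].
    - exists [], []. split; [exact Hi| split; reflexivity].
    - apply st2split_transfer; auto.
    - eapply transfer_iff; [intros p q; symmetry; apply Bs_converse|].
      apply st2split_transfer; auto. }
  assert (A2 : forall B, branching_bisimulation (split_lts N1) (split_lts N2) B ->
                branching_bisimulation (st_lts N1) (st_lts N2) (Bst B)).
  { intros B [Hi [HT HC]]. split; [|split].
    - split; [reflexivity| exact Hi].
    - apply split2st_transfer; auto.
    - apply split2st_converse; auto. }
  split; split.
  - intros [B H]; exists (Bs B); auto.
  - intros [B H]; exists (Bst B); auto.
  - intros [B [H [D1 D2]]]; exists (Bs B). split; [auto| split].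
    + apply st2split_div; auto. apply (plain_no_st_tau Hpl). apply H.
    + apply div_none_sp; auto.
  - intros [B [H [D1 D2]]]; exists (Bst B). split; [auto| split].
    + apply split2st_div; auto.
    + apply div_none_st; auto.
Qed.
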